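(* For every single-item auction setting with $n$ bidders, binary signals and interdependent SOS valuations, there exists an ex post IC-IR randomized mechanism that achieves a $2$-approximation to the optimal welfare; that is, there is an ex post IC-IR mechanism $M=(x,p)$ such that for every signal profile $s\in\{0,1\}^n$, $$\sum_{i=1}^n x_i(s)\,v_i(s)\;\ge\;\tfrac12\max_{i\in[n]} v_i(s).$$
   Context: Single-item auction with bidders $[n]$. Each bidder $i$ has a private binary signal $s_i\in\{0,1\}$; a signal profile $s=(s_1,\dots,s_n)$ is identified with the set $S=\{i: s_i=1\}\subseteq[n]$. Each bidder $i$ has a publicly known valuation $v_i:2^{[n]}\to\mathbb{R}_{\ge0}$ (its value for the item given the set of high signals), which is weakly increasing (monotone: $S\subseteq T\Rightarrow v_i(S)\le v_i(T)$) and strictly increasing in its own signal ($v_i(S\cup\{i\})>v_i(S)$ for $i\notin S$). Valuations are SOS (submodular over signals) if each $v_i$ is a submodular set function: for all $S\subseteq T\subseteq[n]$ and $\ell\in[n]\setminus T$, $v_i(S\cup\{\ell\})-v_i(S)\ge v_i(T\cup\{\ell\})-v_i(T)$. A randomized mechanism $M=(x,p)$ maps each reported signal profile $s$ to allocation probabilities $x(s)=(x_1(s),\dots,x_n(s))$ with $x_i(s)\ge0$ and $\sum_i x_i(s)\le1$ (feasibility), and expected payments $p(s)=(p_1(s),\dots,p_n(s))$. $M$ is ex post IC-IR if for every bidder $i$, every true profile $s$ and every report $s_i'$, the quantity $x_i(s_{-i},s_i')v_i(s)-p_i(s_{-i},s_i')$ is nonnegative when $s_i'=s_i$ and is maximized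 over $s_i'$ at $s_i'=s_i$. *)

(* Defs.v *)
From mathcomp Require Import all_boot all_order all_algebra.
From mathcomp Require Import reals.
Set Implicit Arguments. Unset Strict Implicit. Unset Printing Implicit Defensive.
Import Order.TTheory GRing.Theory Num.Theory.
Local Open Scope ring_scope.

(* Bidders are 'I_n; a signal profile s in {0,1}^n is identified with the set
   S = {i | s_i = 1} : {set 'I_n}. A valuation profile is
   v : 'I_n -> {set 'I_n} -> R, with v i S the value of bidder i. *)

Definition monotone_val (n : nat) (R : realType) (f : {set 'I_n} -> R) : Prop :=
  forall S T : {set 'I_n}, S \subset T -> f S <= f T.

Definition strict_own (n : nat) (R : realType) (i : 'I_n) (f : {set 'I_n} -> R) : Prop :=
  forall S : {set 'I_n}, i \notin S -> f S < f (i |: S).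

Definition submodular_val (n : nat) (R : realType) (f : {set 'I_n} -> R) : Prop :=
  forall (S T : {set 'I_n}) (l : 'I_n), S \subset T -> l \notin T ->
    f (l |: S) - f S >= f (l |: T) - f T.

Definition SOS_valuations (n : nat) (R : realType) (v : 'I_n -> {set 'I_n} -> R) : Prop :=
  forall i : 'I_n,
    (forall S, 0 <= v i S) /\ monotone_val (v i) /\ strict_own i (v i)
    /\ submodular_val (v i).

Definition report (n : nat) (S : {set 'I_n}) (i : 'I_n) (b : bool) : {set 'I_n} :=
  if b then i |: S else S :\ i.

(* randomized mechanism: allocation probabilities x S i, expected payments p S i *)
Definition feasible (n : nat) (R : realType) (x : {set 'I_n} -> 'I_n -> R) : Prop :=
  forall S : {set 'I_n}, (forall i, 0 <= x S i) /\ \sum_(i < n) x S i <= 1.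

Definition utility (n : nat) (R : realType) (v : 'I_n -> {set 'I_n} -> R)
  (x p : {set 'I_n} -> 'I_n -> R) (i : 'I_n) (S : {set 'I_n}) (b : bool) : R :=
  x (report S i b) i * v i S - p (report S i b) i.

Definition expost_IC_IR (n : nat) (R : realType) (v : 'I_n -> {set 'I_n} -> R)
  (x p : {set 'I_n} -> 'I_n -> R) : Prop :=
  forall (i : 'I_n) (S : {set 'I_n}),
    0 <= utility v x p i S (i \in S) /\
    forall b : bool, utility v x p i S b <= utility v x p i S (i \in S).

(* Main.v *)
Require Import Defs.
From mathcomp Require Import all_boot all_order all_algebra.
From mathcomp Require Import reals lra.
Import Order.TTheory GRing.Theory Num.Theory.
Local Open Scope ring_scope.
Set Implicit Arguments. Unset Strict Implicit.

Lemma setDD1C (n : nat) (S : {set 'I_n}) (a b : 'I_n) :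
  S :\ a :\ b = S :\ b :\ a.
Proof. by apply/setP=> x; rewrite !inE; do 2 case: (_ == _). Qed.

Lemma setU1D1 (n : nat) (S : {set 'I_n}) (a : 'I_n) :
  (a |: S) :\ a = S :\ a.
Proof. by apply/setP=> x; rewrite !inE; case: (x == a). Qed.

Lemma sub2 (R : realType) (n : nat) (f : {set 'I_n} -> R) :
  (forall S, 0 <= f S) -> submodular_val f ->
  forall (S : {set 'I_n}) (a b : 'I_n), a \in S -> b \in S -> a != b -> f S <= f (S :\ a) + f (S :\ b).
Proof.
move=> f0 fsub S a b aS bS ab.
have := fsub (S :\ a :\ b) (S :\ a) a (subD1set _ _) ltac:(by rewrite setD11).
have aSb : a \in S :\ b by apply/setD1P; split.
rewrite setD1K // setDD1C setD1K //.
have := f0 (S :\ b :\ a); lra.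
Qed.


Definition needb (R : realType) (n : nat) (v : 'I_n -> {set 'I_n} -> R)
  (t : {set 'I_n} -> 'I_n) (X : {set 'I_n}) : bool :=
  (t X \notin X) &&
  ([forall k in X, 2 * v k X < v (t X) X] ||
   [exists m in X, (t (X :\ m) == m) && [forall k in X, v m X + v k X < v (t X) X]]).

Definition inF (R : realType) (n : nat) (v : 'I_n -> {set 'I_n} -> R)
  (t : {set 'I_n} -> 'I_n) (S : {set 'I_n}) (i : 'I_n) : bool :=
  (i \in S) && needb v t (S :\ i) && (t (S :\ i) == i).

Lemma SOS_nonneg (R : realType) (n : nat) (v : 'I_n -> {set 'I_n} -> R) : SOS_valuations v ->
  forall i S, 0 <= v i S.
Proof. by move=> H i S; case: (H i) => [h _]; exact: h. Qed.

Lemma SOS_mono (R : realType) (n : nat) (v : 'I_n -> {set 'I_n} -> R) : SOS_valuations v ->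
  forall i (S T : {set 'I_n}), S \subset T -> v i S <= v i T.
Proof. by move=> H i S T; case: (H i) => [_ [h _]]; exact: h. Qed.

Lemma SOS_strict (R : realType) (n : nat) (v : 'I_n -> {set 'I_n} -> R) : SOS_valuations v ->
  forall i (S : {set 'I_n}), i \notin S -> v i S < v i (i |: S).
Proof. by move=> H i S; case: (H i) => [_ [_ [h _]]]; exact: h. Qed.

Lemma SOS_sub2 (R : realType) (n : nat) (v : 'I_n -> {set 'I_n} -> R) : SOS_valuations v ->
  forall i (S : {set 'I_n}) (a b : 'I_n), a \in S -> b \in S -> a != b ->
  v i S <= v i (S :\ a) + v i (S :\ b).
Proof.
move=> H i; case: (H i) => [h0 [_ [_ hs]]]; exact: sub2.
Qed.

Lemma N1lemma (R : realType) (n : nat) (v : 'I_n -> {set 'I_n} -> R) (t : {set 'I_n} -> 'I_n) :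
  SOS_valuations v -> (forall X k, v k X <= v (t X) X) ->
  forall (S : {set 'I_n}) (a m j k : 'I_n),
  m \in S :\ a -> t (S :\ a :\ m) = m ->
  v m (S :\ a) + v k (S :\ a) < v a (S :\ a) ->
  j \in S :\ a -> j != m ->
  v k (S :\ a) < v a (S :\ j).
Proof.
move=> Hv Ht S a m j k mX tm hk jX jm.
have h1 := SOS_sub2 Hv a jX mX jm.
have h2 := Ht (S :\ a :\ m) a; rewrite tm in h2.
have h3 := SOS_mono Hv m (subD1set (S :\ a) m).
have h4 : v a (S :\ a :\ j) <= v a (S :\ j).
  by apply: SOS_mono => //; rewrite setDD1C; exact: subD1set.
lra.
Qed.

Lemma key (R : realType) (n : nat) (v : 'I_n -> {set 'I_n} -> R) (t : {set 'I_n} -> 'I_n) :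
  SOS_valuations v -> (forall X k, v k X <= v (t X) X) ->
  forall (S : {set 'I_n}) (a b c : 'I_n),
  inF v t S a -> b \in S -> c \in S -> a != b -> a != c -> b != c ->
  v b (S :\ a) + v c (S :\ a) < v a (S :\ b) + v a (S :\ c).
Proof.
move=> Hv Ht S a b c /andP[/andP[aS nd] /eqP ta] bS cS ab ac bc.
have h1 : v a (S :\ a) < v a S.
  by rewrite -{2}(setD1K aS); apply: SOS_strict => //; rewrite setD11.
have h2 := SOS_sub2 Hv a bS cS bc.
have bX : b \in S :\ a by apply/setD1P; split => //; rewrite eq_sym.
have cX : c \in S :\ a by apply/setD1P; split => //; rewrite eq_sym.
move: nd; rewrite /needb ta => /andP[_ /orP[/forall_inP N0 | /exists_inP[m mX /andP[/eqP tm /forall_inP N1]]]].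
  have := N0 b bX; have := N0 c cX; lra.
case: (eqVneq m b) => [mb|mb].
  have := N1 c cX; rewrite mb; lra.
case: (eqVneq m c) => [mc|mc].
  have := N1 b bX; rewrite mc; lra.
have e1 := N1lemma Hv Ht mX tm (N1 b bX) bX (ltac:(by rewrite eq_sym)).
have e2 := N1lemma Hv Ht mX tm (N1 c cX) cX (ltac:(by rewrite eq_sym)).
lra.
Qed.

Lemma L1 (R : realType) (n : nat) (v : 'I_n -> {set 'I_n} -> R) (t : {set 'I_n} -> 'I_n) :
  SOS_valuations v -> (forall X k, v k X <= v (t X) X) ->
  forall (S : {set 'I_n}) (a b c : 'I_n),
  inF v t S a -> inF v t S b -> inF v t S c -> a != b -> a != c -> b != c -> False.
Proof.
move=> Hv Ht S a b c Fa Fb Fc ab ac bc.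
have inS : forall x, inF v t S x -> x \in S by move=> x /andP[/andP[]].
have := key Hv Ht Fa (inS _ Fb) (inS _ Fc) ab ac bc.
have := key Hv Ht Fb (inS _ Fa) (inS _ Fc) (ltac:(by rewrite eq_sym)) bc ac.
have := key Hv Ht Fc (inS _ Fa) (inS _ Fb) (ltac:(by rewrite eq_sym)) (ltac:(by rewrite eq_sym)) ab.
lra.
Qed.

Lemma L2 (R : realType) (n : nat) (v : 'I_n -> {set 'I_n} -> R) (t : {set 'I_n} -> 'I_n) :
  SOS_valuations v -> (forall X k, v k X <= v (t X) X) ->
  forall (S : {set 'I_n}) (i j k : 'I_n), i \in S -> j \in S -> i != j ->
  t (S :\ i) = i -> t (S :\ j) = j -> v k S <= v i S + v j S.
Proof.
move=> Hv Ht S i j k iS jS ij ti tj.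
have h1 := SOS_sub2 Hv k iS jS ij.
have h2 := Ht (S :\ i) k; rewrite ti in h2.
have h3 := Ht (S :\ j) k; rewrite tj in h3.
have h4 := SOS_mono Hv i (subD1set S i).
have h5 := SOS_mono Hv j (subD1set S j).
lra.
Qed.

Lemma Lb (R : realType) (n : nat) (v : 'I_n -> {set 'I_n} -> R) (t : {set 'I_n} -> 'I_n) :
  SOS_valuations v -> (forall X k, v k X <= v (t X) X) ->
  forall (S : {set 'I_n}) (i j : 'I_n),
  inF v t S i -> inF v t S j -> i != j -> needb v t S -> False.
Proof.
move=> Hv Ht S i j /andP[/andP[iS _] /eqP ti] /andP[/andP[jS _] /eqP tj] ij.
have hL := L2 Hv Ht (t S) iS jS ij ti tj.
rewrite /needb => /andP[_ /orP[/forall_inP N0 | /exists_inP[m mS /andP[/eqP tm /forall_inP N1]]]].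
  have := N0 i iS; have := N0 j jS; lra.
case: (eqVneq m i) => [mi|mi].
  have := N1 j jS; rewrite mi; lra.
case: (eqVneq m j) => [mj|mj].
  have := N1 i iS; rewrite mj; lra.
have h1 := SOS_sub2 Hv (t S) iS mS (ltac:(by rewrite eq_sym)).
have h2 := Ht (S :\ i) (t S); rewrite ti in h2.
have h3 := Ht (S :\ m) (t S); rewrite tm in h3.
have h4 := SOS_mono Hv i (subD1set S i).
have h5 := SOS_mono Hv m (subD1set S m).
have := N1 i iS; lra.
Qed.

Definition aa (R : realType) (n : nat) (v : 'I_n -> {set 'I_n} -> R)
  (t : {set 'I_n} -> 'I_n) (S : {set 'I_n}) (i : 'I_n) : R :=
  if inF v t S i then 1 / 2 else 0.

Definition bb (R : realType) (n : nat) (v : 'I_n -> {set 'I_n} -> R)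
  (t : {set 'I_n} -> 'I_n) (S : {set 'I_n}) (i : 'I_n) : R :=
  if needb v t S && (i == t S) then 1 / 2 else 0.

Definition rr (R : realType) (n : nat) (v : 'I_n -> {set 'I_n} -> R)
  (t : {set 'I_n} -> 'I_n) (S : {set 'I_n}) : R :=
  1 - \sum_(k < n) aa v t S k - (if needb v t S then 1 / 2 else 0).

Definition cc (R : realType) (n : nat) (v : 'I_n -> {set 'I_n} -> R)
  (t h : {set 'I_n} -> 'I_n) (S : {set 'I_n}) (i : 'I_n) : R :=
  if (i \in S) && (i == h S) then rr v t S else 0.

Definition xx (R : realType) (n : nat) (v : 'I_n -> {set 'I_n} -> R)
  (t h : {set 'I_n} -> 'I_n) (S : {set 'I_n}) (i : 'I_n) : R :=
  aa v t S i + bb v t S i + cc v t h S i.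

Lemma sumF (R : realType) (n : nat) (v : 'I_n -> {set 'I_n} -> R) (t : {set 'I_n} -> 'I_n) :
  SOS_valuations v -> (forall X k, v k X <= v (t X) X) ->
  forall S : {set 'I_n},
  [/\ forall k, ~~ inF v t S k & \sum_(k < n) aa v t S k = 0]
  \/ (exists m, [/\ inF v t S m, forall k, inF v t S k -> k = m &
                   \sum_(k < n) aa v t S k = 1 / 2])
  \/ (exists i j, [/\ i != j, inF v t S i, inF v t S j,
        forall k, inF v t S k -> k = i \/ k = j &
        \sum_(k < n) aa v t S k = 1]).
Proof.
move=> Hv Ht S.
case: (pickP (inF v t S)) => [i Fi|none].
  case: (pickP (fun k => inF v t S k && (k != i))) => [j /andP[Fj ji]|none2].
    right; right; exists i, j.
    have oth : forall k, inF v t S k -> k = i \/ k = j.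
      move=> k Fk; case: (eqVneq k i) => [->|ki]; first by left.
      case: (eqVneq k j) => [->|kj]; first by right.
      exfalso; apply: (L1 Hv Ht Fk Fi Fj ki kj).
      by rewrite eq_sym.
    split => //; first by rewrite eq_sym.
    rewrite (bigD1 i) //= (bigD1 j) /=; last by rewrite ji.
    rewrite big1 => [|k /andP[ki kj]].
      by rewrite /aa Fi Fj; lra.
    rewrite /aa; case Fk: (inF v t S k) => //.
    case: (oth k Fk) => e; first by move: ki; rewrite e eqxx.
    by move: kj; rewrite e eqxx.
  right; left; exists i.
  have oth : forall k, inF v t S k -> k = i.
    move=> k Fk; case: (eqVneq k i) => // ki.
    by have := none2 k; rewrite Fk ki.
  split => //.
  rewrite (bigD1 i) //= big1 => [|k ki].
    by rewrite /aa Fi; lra.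
  rewrite /aa; case Fk: (inF v t S k) => //.
  by move: ki; rewrite (oth k Fk) eqxx.
left; split; first by move=> k; rewrite none.
by rewrite big1 // => k _; rewrite /aa none.
Qed.

Lemma rr_ge0 (R : realType) (n : nat) (v : 'I_n -> {set 'I_n} -> R) (t : {set 'I_n} -> 'I_n) :
  SOS_valuations v -> (forall X k, v k X <= v (t X) X) ->
  forall S : {set 'I_n}, 0 <= rr v t S.
Proof.
move=> Hv Ht S; rewrite /rr.
case: (sumF Hv Ht S) => [[_ ->]|[[m [_ _ ->]]|[i [j [ij Fi Fj _ ->]]]]].
- by case: needb; lra.
- by case: needb; lra.
- case N: (needb v t S); last lra.
  by exfalso; apply: (Lb Hv Ht Fi Fj ij N).
Qed.

Lemma sum_bb (R : realType) (n : nat) (v : 'I_n -> {set 'I_n} -> R) (t : {set 'I_n} -> 'I_n)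
  (S : {set 'I_n}) :
  \sum_(k < n) bb v t S k = if needb v t S then 1 / 2 else 0.
Proof.
rewrite (bigD1 (t S)) //= big1 => [|k kt].
  by rewrite /bb eqxx andbT addr0.
by rewrite /bb (negbTE kt) andbF.
Qed.

Lemma sum_cc (R : realType) (n : nat) (v : 'I_n -> {set 'I_n} -> R) (t h : {set 'I_n} -> 'I_n)
  (S : {set 'I_n}) :
  \sum_(k < n) cc v t h S k = if h S \in S then rr v t S else 0.
Proof.
rewrite (bigD1 (h S)) //= big1 => [|k kt].
  by rewrite /cc eqxx andbT addr0.
by rewrite /cc (negbTE kt) andbF.
Qed.

Lemma xx_ge0 (R : realType) (n : nat) (v : 'I_n -> {set 'I_n} -> R) (t h : {set 'I_n} -> 'I_n) :
  SOS_valuations v -> (forall X k, v k X <= v (t X) X) ->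
  forall S i, 0 <= xx v t h S i.
Proof.
move=> Hv Ht S i; rewrite /xx /aa /bb /cc.
have := rr_ge0 Hv Ht S.
by case: inF; case: (_ && _); case: (_ && _); lra.
Qed.

Lemma xx_sum (R : realType) (n : nat) (v : 'I_n -> {set 'I_n} -> R) (t h : {set 'I_n} -> 'I_n) :
  SOS_valuations v -> (forall X k, v k X <= v (t X) X) ->
  forall S, \sum_(k < n) xx v t h S k <= 1.
Proof.
move=> Hv Ht S; rewrite /xx !big_split /= sum_bb sum_cc.
have := rr_ge0 Hv Ht S; rewrite /rr.
by case: (h S \in S); lra.
Qed.

Lemma xx_mono (R : realType) (n : nat) (v : 'I_n -> {set 'I_n} -> R) (t h : {set 'I_n} -> 'I_n) :
  SOS_valuations v -> (forall X k, v k X <= v (t X) X) ->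
  forall (T : {set 'I_n}) i, i \notin T -> xx v t h T i <= xx v t h (i |: T) i.
Proof.
move=> Hv Ht T i iT.
have e1 : aa v t T i = 0 by rewrite /aa /inF (negbTE iT).
have e2 : cc v t h T i = 0 by rewrite /cc (negbTE iT).
have e3 : bb v t T i <= aa v t (i |: T) i.
  rewrite /bb /aa /inF setU1K // setU11 /=.
  case: (t T =P i) => [->|ne]; first by rewrite eqxx lexx.
  have ne' : (i == t T) = false by apply/eqP => e; apply: ne; rewrite e.
  by rewrite ne' !andbF lexx.
have := rr_ge0 Hv Ht (i |: T) => r0.
have b0 : 0 <= bb v t (i |: T) i by rewrite /bb; case: (_ && _); lra.
have c0 : 0 <= cc v t h (i |: T) i by rewrite /cc; case: (_ && _); lra.
rewrite /xx e1 e2; lra.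
Qed.

Lemma notneed (R : realType) (n : nat) (v : 'I_n -> {set 'I_n} -> R) (t : {set 'I_n} -> 'I_n)
  (S : {set 'I_n}) : ~~ needb v t S ->
  (t S \in S) \/
  ((exists2 k, k \in S & v (t S) S <= 2 * v k S) /\
   (forall m, m \in S -> t (S :\ m) = m -> exists2 k, k \in S & v (t S) S <= v m S + v k S)).
Proof.
rewrite /needb negb_and negbK => /orP[->|]; first by left.
rewrite negb_or => /andP[/forall_inPn[k kS nk] /exists_inPn N1].
right; split; first by exists k => //; rewrite leNgt.
move=> m mS tm; have := N1 m mS; rewrite tm eqxx /= => /forall_inPn[k' kS' nk'].
by exists k' => //; rewrite leNgt.
Qed.

Lemma term_le (R : realType) (n : nat) (v : 'I_n -> {set 'I_n} -> R) (t h : {set 'I_n} -> 'I_n) :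
  SOS_valuations v -> (forall X k, v k X <= v (t X) X) ->
  forall S j k, j != k ->
  xx v t h S j * v j S + xx v t h S k * v k S <= \sum_(l < n) xx v t h S l * v l S.
Proof.
move=> Hv Ht S j k jk.
have g0 : forall l, 0 <= xx v t h S l * v l S.
  by move=> l; apply: mulr_ge0; [exact: xx_ge0 | exact: SOS_nonneg].
rewrite (bigD1 j) //= (bigD1 k) /=; last by rewrite eq_sym.
have : 0 <= \sum_(i < n | (i != j) && (i != k)) xx v t h S i * v i S.
  by apply: sumr_ge0 => l _; exact: g0.
lra.
Qed.

Lemma term_le1 (R : realType) (n : nat) (v : 'I_n -> {set 'I_n} -> R) (t h : {set 'I_n} -> 'I_n) :
  SOS_valuations v -> (forall X k, v k X <= v (t X) X) ->
  forall S j,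
  xx v t h S j * v j S <= \sum_(l < n) xx v t h S l * v l S.
Proof.
move=> Hv Ht S j.
have g0 : forall l, 0 <= xx v t h S l * v l S.
  by move=> l; apply: mulr_ge0; [exact: xx_ge0 | exact: SOS_nonneg].
rewrite (bigD1 j) //=.
have : 0 <= \sum_(i < n | i != j) xx v t h S i * v i S.
  by apply: sumr_ge0 => l _; exact: g0.
lra.
Qed.

Lemma welfare (R : realType) (n : nat) (v : 'I_n -> {set 'I_n} -> R) (t h : {set 'I_n} -> 'I_n) :
  SOS_valuations v -> (forall X k, v k X <= v (t X) X) ->
  (forall (S : {set 'I_n}) (k : 'I_n), k \in S -> h S \in S /\ v k S <= v (h S) S) ->
  forall S i, v i S / 2 <= \sum_(l < n) xx v t h S l * v l S.
Proof.
move=> Hv Ht Hh S i.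
have Mi := Ht S i.
suff : v (t S) S / 2 <= \sum_(l < n) xx v t h S l * v l S by lra.
have r0 := rr_ge0 Hv Ht S.
have a0 : forall j, 0 <= aa v t S j by move=> j; rewrite /aa; case: inF; lra.
have b0 : forall j, 0 <= bb v t S j by move=> j; rewrite /bb; case: (_ && _); lra.
have c0 : forall j, 0 <= cc v t h S j by move=> j; rewrite /cc; case: (_ && _); lra.
have xa : forall j, aa v t S j <= xx v t h S j by move=> j; rewrite /xx; have := b0 j; have := c0 j; lra.
have xb : forall j, bb v t S j <= xx v t h S j by move=> j; rewrite /xx; have := a0 j; have := c0 j; lra.
have xc : forall j, cc v t h S j <= xx v t h S j by move=> j; rewrite /xx; have := b0 j; have := a0 j; lra.
have v0 := SOS_nonneg Hv.
have mulb : forall j c, c <= xx v t h S j -> c * v j S <= xx v t h S j * v j S.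
  by move=> j c cx; apply: ler_wpM2r.
have T1 := @term_le1 R n v t h Hv Ht S.
have T2 := @term_le R n v t h Hv Ht S.
case N: (needb v t S).
  have := mulb (t S) (1/2) ltac:(by have := xb (t S); rewrite /bb N eqxx).
  have := T1 (t S); lra.
have NN := notneed (negbT N).
have Ac : forall j, inF v t S j -> 1 / 2 <= xx v t h S j.
  by move=> j Fj; have := xa j; rewrite /aa Fj.
have hb : forall k, k \in S -> v (t S) S <= 2 * v (h S) S.
  move=> k kS; have [hS hk] := Hh S k kS.
  case: NN => [tS|[[k' k'S k'e] _]].
    have [_ ht] := Hh S _ tS; have := v0 (h S) S; lra.
  have [_ hk'] := Hh S k' k'S; lra.
case: (sumF Hv Ht S) => [[noF s0]|[[m [Fm uniq s1]]|[i' [j' [ij Fi Fj _ s2]]]]].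
-
  have [k0 k0S] : exists2 k, k \in S & true.
    by case: NN => [tS|[[k' k'S _] _]]; [exists (t S) | exists k'].
  have [hS _] := Hh S k0 k0S.
  have := xc (h S); rewrite /cc hS eqxx /rr s0 N /= => cx.
  have := mulb (h S) 1 ltac:(lra).
  have := T1 (h S); have := hb k0 k0S; lra.
- have /andP[/andP[mS _] /eqP tm] := Fm.
  have [hS hm] := Hh S m mS.
  have cx : 1 / 2 <= cc v t h S (h S) by rewrite /cc hS eqxx /rr s1 N /=; lra.
  have bnd : v (t S) S <= v m S + v (h S) S.
    case: NN => [tS|[_ N1]].
      have [_ ht] := Hh S _ tS; have := v0 m S; lra.
    have [k kS ke] := N1 m mS tm; have [_ hk] := Hh S k kS; lra.
  case: (eqVneq (h S) m) => [hm'|hm'].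
    have : 1 <= xx v t h S m.
      move: cx; rewrite hm' /xx => cx; have := b0 m; have : aa v t S m = 1/2 by rewrite /aa Fm.
      lra.
    move=> x1; have := mulb m 1 x1; have := T1 m.
    rewrite hm' in bnd; lra.
  have := mulb m (1/2) (Ac m Fm).
  have := mulb (h S) (1/2) (le_trans cx (xc _)).
  have := T2 m (h S) (ltac:(by rewrite eq_sym)).
  lra.
- have /andP[/andP[iS _] /eqP ti] := Fi.
  have /andP[/andP[jS _] /eqP tj] := Fj.
  have := L2 Hv Ht (t S) iS jS ij ti tj.
  have := mulb i' (1/2) (Ac i' Fi).
  have := mulb j' (1/2) (Ac j' Fj).
  have := T2 i' j' ij.
  lra.
Qed.

Definition pp (R : realType) (n : nat) (v : 'I_n -> {set 'I_n} -> R)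
  (t h : {set 'I_n} -> 'I_n) (S : {set 'I_n}) (i : 'I_n) : R :=
  xx v t h S i * v i (S :\ i).

Lemma rep_D1 (n : nat) (S : {set 'I_n}) i b : report S i b :\ i = S :\ i.
Proof.
by case: b; rewrite /report; apply/setP => x; rewrite !inE; case: (x == i).
Qed.

Lemma rep_true (n : nat) (S : {set 'I_n}) i : report S i (i \in S) = S.
Proof.
rewrite /report; case: (boolP (i \in S)) => iS; apply/setP => x; rewrite !inE.
  by case: eqP => // ->; rewrite iS.
by case: eqP => // ->; rewrite (negbTE iS).
Qed.

Lemma IC (R : realType) (n : nat) (v : 'I_n -> {set 'I_n} -> R) (t h : {set 'I_n} -> 'I_n) :
  SOS_valuations v -> (forall X k, v k X <= v (t X) X) ->
  expost_IC_IR v (xx v t h) (pp v t h).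
Proof.
move=> Hv Ht i S.
have D0 : 0 <= v i S - v i (S :\ i).
  by have := SOS_mono Hv i (subD1set S i); lra.
have U : forall b, utility v (xx v t h) (pp v t h) i S b =
    xx v t h (report S i b) i * (v i S - v i (S :\ i)).
  by move=> b; rewrite /utility /pp rep_D1 mulrBr.
split.
  by rewrite U rep_true; apply: mulr_ge0 => //; exact: xx_ge0.
move=> b; rewrite !U rep_true.
case: (boolP (i \in S)) => iS.
  apply: ler_wpM2r => //.
  case: b; rewrite /report.
    have -> : i |: S = S by apply/setP => x; rewrite !inE; case: eqP => // ->.
    exact: lexx.
  have := xx_mono h Hv Ht (T := S :\ i) (i := i); rewrite setD1K // setD11; apply => //.
have -> : S :\ i = S.
  by apply/setP => x; rewrite !inE; case: eqP => // ->; rewrite (negbTE iS).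
by rewrite subrr !mulr0.
Qed.

Unset Implicit Arguments.

Theorem theorem1 (R : realType) (n : nat) (v : 'I_n -> {set 'I_n} -> R) :
  SOS_valuations v ->
  exists x p : {set 'I_n} -> 'I_n -> R,
    feasible x /\ expost_IC_IR v x p /\
    forall (S : {set 'I_n}) (i : 'I_n),
      \sum_(j < n) x S j * v j S >= v i S / 2.
Proof.
move=> Hv; case: n v Hv => [|n] v Hv.
  exists (fun _ _ => 0), (fun _ _ => 0).
  have E : forall m : 'I_0, False by move=> [m hm]; rewrite ltn0 in hm.
  split; first by move=> S; split => [i|]; [case: (E i) | rewrite big_ord0].
  by split; [move=> i; case: (E i) | move=> S i; case: (E i)].
pose t := fun X : {set 'I_n.+1} => [arg max_(k > ord0) v k X]%O.
have Ht : forall X k, v k X <= v (t X) X.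
  by move=> X k; rewrite /t; case: arg_maxP => // j _ Hj; exact: Hj.
pose h := fun S : {set 'I_n.+1} =>
  if [pick k in S] is Some k0 then [arg max_(k > k0 in S) v k S]%O else ord0.
have Hh : forall (S : {set 'I_n.+1}) k, k \in S -> h S \in S /\ v k S <= v (h S) S.
  move=> S k kS; rewrite /h; case: pickP => [k0 k0S|none]; last by rewrite none in kS.
  by case: arg_maxP => // j jS Hj; split => //; exact: Hj.
exists (xx v t h), (pp v t h).
split; first by move=> S; split; [exact: xx_ge0 | exact: xx_sum].
split; first exact: IC.
move=> S i; exact: welfare.
Qed.
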